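(* Let $\mathcal{D}$ be an algebra and vector lattice of bounded real functions with the Stone property, and $(\mathcal{E},\mathcal{D})$ a bilinear form such that $(\mathcal{E},\mathcal{D}_0)$ has zero killing and all functionals $L_f(h):=2\mathcal{E}(fh,f)-\mathcal{E}(f^2,h)$, $f\in\mathcal{D}_0$, are positive on $\mathcal{D}$. Then $\mathcal{E}(f)=\frac12\|L_f\|_{\mathcal{D}'}$ for every $f\in\mathcal{D}_0$.
   Context: $\|L\|_{\mathcal{D}'}=\sup\{|L(h)|:h\in\mathcal{D},\|h\|_{\sup}\le1\}$. Stone property: $f\wedge1\in\mathcal{D}$. Bilinear form: symmetric nonnegative definite bilinear, $\mathcal{E}(f)=\mathcal{E}(f,f)$. For $f\ge0$ in $\mathcal{D}$, $E_f:=\{\varphi\in\mathcal{D}:\mathbf 1_{\{f>0\}}\le\varphi\le\mathbf 1\}$; $\mathcal{D}_0^+=\{f\ge0:E_f\ne\emptyset\}$, $\mathcal{D}_0=\mathrm{span}\,\mathcal{D}_0^+$. $(\mathcal{E},\mathcal{D}_0)$ has zero killing if $\inf\{\mathcal{E}(f,\varphi):\varphi\in E_f\}=0$ for all $f\in\mathcal{D}_0^+$. A functional is positive if it is nonnegative on nonnegative functions. *)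

(* Defs.v *)
From Stdlib Require Import Reals.
Open Scope R_scope.

Definition fun_set (X : Type) := (X -> R) -> Prop.

Definition fadd {X} (f g : X -> R) : X -> R := fun x => f x + g x.
Definition fscal {X} (c : R) (f : X -> R) : X -> R := fun x => c * f x.
Definition fmul {X} (f g : X -> R) : X -> R := fun x => f x * g x.
Definition fmax {X} (f g : X -> R) : X -> R := fun x => Rmax (f x) (g x).
Definition fmin1 {X} (f : X -> R) : X -> R := fun x => Rmin (f x) 1.
Definition fzero {X} : X -> R := fun _ => 0.

Definition bounded {X} (f : X -> R) : Prop := exists M, forall x, Rabs (f x) <= M.

Definition stone_algebra_lattice {X} (D : fun_set X) : Prop :=
  (forall f, D f -> bounded f) /\
  D fzero /\
  (forall f g, D f -> D g -> D (fadd f g)) /\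
  (forall c f, D f -> D (fscal c f)) /\
  (forall f g, D f -> D g -> D (fmul f g)) /\
  (forall f g, D f -> D g -> D (fmax f g)) /\
  (forall f, D f -> D (fmin1 f)).

Definition bilinear_form {X} (D : fun_set X) (E : (X -> R) -> (X -> R) -> R) : Prop :=
  (forall f g, D f -> D g -> E f g = E g f) /\
  (forall f g h, D f -> D g -> D h -> E (fadd f g) h = E f h + E g h) /\
  (forall c f h, D f -> D h -> E (fscal c f) h = c * E f h) /\
  (forall f, D f -> 0 <= E f f).

Definition Eset {X} (D : fun_set X) (f : X -> R) (phi : X -> R) : Prop :=
  D phi /\ (forall x, 0 < f x -> 1 <= phi x) /\ (forall x, 0 <= phi x <= 1).

Definition D0plus {X} (D : fun_set X) (f : X -> R) : Prop :=
  D f /\ (forall x, 0 <= f x) /\ exists phi, Eset D f phi.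

Inductive span {X} (P : fun_set X) : fun_set X :=
| span_zero : span P fzero
| span_gen : forall f, P f -> span P f
| span_add : forall f g, span P f -> span P g -> span P (fadd f g)
| span_scal : forall c f, span P f -> span P (fscal c f).

Definition D0 {X} (D : fun_set X) : fun_set X := span (D0plus D).

Definition is_glb (S : R -> Prop) (m : R) : Prop :=
  (forall r, S r -> m <= r) /\ (forall b, (forall r, S r -> b <= r) -> b <= m).

Definition zero_killing {X} (D : fun_set X) (E : (X -> R) -> (X -> R) -> R) : Prop :=
  forall f, D0plus D f -> is_glb (fun r => exists phi, Eset D f phi /\ r = E f phi) 0.

Definition Lfun {X} (E : (X -> R) -> (X -> R) -> R) (f h : X -> R) : R :=
  2 * E (fmul f h) f - E (fmul f f) h.

Definition positive_on {X} (D : fun_set X) (L : (X -> R) -> R) : Prop :=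
  forall h, D h -> (forall x, 0 <= h x) -> 0 <= L h.

Definition dual_norm_is {X} (D : fun_set X) (L : (X -> R) -> R) (v : R) : Prop :=
  is_lub (fun r => exists h, D h /\ (forall x, Rabs (h x) <= 1) /\ r = Rabs (L h)) v.

(* Main.v *)
Require Import Defs.
From Stdlib Require Import Reals.
From Stdlib Require Import Lra Classical FunctionalExtensionality.
Open Scope R_scope.

Lemma D0_in_D X (D : fun_set X) (hD : stone_algebra_lattice D) :
  forall f, D0 D f -> D f.
Proof.
  destruct hD as [hb [h0 [hadd [hscal [hmul [hmax hmin]]]]]].
  intros f Hf; induction Hf; auto. destruct H; auto.
Qed.

Lemma D0_phi X (D : fun_set X) (hD : stone_algebra_lattice D) :
  forall f, D0 D f -> exists phi, D phi /\ (forall x, 0 <= phi x <= 1) /\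
     (forall x, f x <> 0 -> phi x = 1).
Proof.
  destruct hD as [hb [h0 [hadd [hscal [hmul [hmax hmin]]]]]].
  intros f Hf; induction Hf.
  - exists fzero; split; [auto|split]; unfold fzero; intros; [lra|exfalso; auto].
  - destruct H as [Df [Hnn [phi [Dp [H1 H2]]]]].
    exists phi; split; [auto|split]; [intro x; apply H2|].
    intros x Hx. specialize (H1 x). specialize (H2 x). specialize (Hnn x).
    assert (0 < f x) by lra. specialize (H1 H). lra.
  - destruct IHHf1 as [p1 [D1 [B1 S1]]]. destruct IHHf2 as [p2 [D2 [B2 S2]]].
    exists (fmax p1 p2); split; [auto|split]; intros x; unfold fmax, Rmax;
    specialize (B1 x); specialize (B2 x); destruct (Rle_dec (p1 x) (p2 x)); try lra.
    + unfold fadd; intros Hx. destruct (Req_dec (g x) 0).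
      * assert (f x <> 0) by (intro; apply Hx; lra). specialize (S1 x H0); lra.
      * apply S2; auto.
    + unfold fadd; intros Hx. destruct (Req_dec (f x) 0).
      * assert (g x <> 0) by (intro; apply Hx; lra). specialize (S2 x H0); lra.
      * apply S1; auto.
  - destruct IHHf as [p [Dp [B S]]]. exists p; repeat split; try apply B; auto.
    intros x Hx; apply S. unfold fscal in Hx. intro; apply Hx; rewrite H; ring.
Qed.

Lemma Lsub X (D : fun_set X) E (hD : stone_algebra_lattice D) (hE : bilinear_form D E)
  f a b : D f -> D a -> D b ->
  Lfun E f (fadd a (fscal (-1) b)) = Lfun E f a - Lfun E f b.
Proof.
  destruct hD as [hb [h0 [hadd [hscal [hmul [hmax hmin]]]]]].
  destruct hE as [hsym [hEadd [hEscal hEpos]]].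
  intros Df Da Db. unfold Lfun.
  assert (e : fmul f (fadd a (fscal (-1) b)) = fadd (fmul f a) (fscal (-1) (fmul f b))).
  { apply functional_extensionality; intro x; unfold fmul, fadd, fscal; ring. }
  rewrite e, hEadd, hEscal by auto.
  rewrite (hsym (fmul f f)), hEadd, hEscal, (hsym a), (hsym b) by auto. ring.
Qed.

Lemma Lscal X (D : fun_set X) E (hD : stone_algebra_lattice D) (hE : bilinear_form D E)
  f a c : D f -> D a -> Lfun E f (fscal c a) = c * Lfun E f a.
Proof.
  destruct hD as [hb [h0 [hadd [hscal [hmul [hmax hmin]]]]]].
  destruct hE as [hsym [hEadd [hEscal hEpos]]].
  intros Df Da. unfold Lfun.
  assert (e : fmul f (fscal c a) = fscal c (fmul f a)).
  { apply functional_extensionality; intro x; unfold fmul, fscal; ring. }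
  rewrite e, hEscal by auto.
  rewrite (hsym (fmul f f)), hEscal, (hsym a) by auto. ring.
Qed.

Theorem corollaryC (X : Type) (D : fun_set X) (E : (X -> R) -> (X -> R) -> R)
  (hD : stone_algebra_lattice D) (hE : bilinear_form D E)
  (hzk : zero_killing D E)
  (hpos : forall f, D0 D f -> positive_on D (Lfun E f)) :
  forall f, D0 D f -> dual_norm_is D (Lfun E f) (2 * E f f).
Proof.
  intros f Hf.
  pose proof (D0_in_D X D hD f Hf) as Df.
  pose proof (D0_phi X D hD f Hf) as [phi0 [Dp0 [B0 S0]]].
  pose proof hD as hD'. pose proof hE as hE'.
  destruct hD' as [hb [h0 [hadd [hscal [hmul [hmax hmin]]]]]].
  destruct hE' as [hsym [hEadd [hEscal hEpos]]].
  assert (Dff : D (fmul f f)) by auto.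
  assert (Hff : D0plus D (fmul f f)).
  { split; auto. split. intro; unfold fmul; nra.
    exists phi0. split; auto. split; auto. intros x Hx. unfold fmul in Hx.
    assert (f x <> 0) by (intro H; rewrite H in Hx; lra). rewrite (S0 x H); lra. }
  destruct (hzk _ Hff) as [glb1 glb2].
  assert (Lpsi : forall psi, Eset D (fmul f f) psi ->
            Lfun E f psi = 2 * E f f - E (fmul f f) psi).
  { intros psi [Dpsi [P1 P2]]. unfold Lfun.
    assert (e : fmul f psi = f).
    { apply functional_extensionality; intro x; unfold fmul.
      destruct (Req_dec (f x) 0) as [z|nz]. rewrite z; ring.
      assert (0 < f x * f x) by (apply Rsqr_pos_lt; auto).
      specialize (P1 x H). specialize (P2 x). assert (psi x = 1) by lra.
      rewrite H0; ring. }
    rewrite e; ring. }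
  assert (Lmono : forall a b, D a -> D b -> (forall x, b x <= a x) ->
            Lfun E f b <= Lfun E f a).
  { intros a b Da Db Hab.
    assert (0 <= Lfun E f (fadd a (fscal (-1) b))).
    { apply (hpos f Hf); auto. intro x; unfold fadd, fscal; specialize (Hab x); lra. }
    rewrite (Lsub X D E hD hE) in H by auto. lra. }
  split.
  - intros r [h [Dh [Hh ->]]].
    set (k := fmax h (fscal (-1) h)).
    assert (Dk : D k) by (unfold k; auto).
    assert (kval : forall x, k x = Rabs (h x)).
    { intro x; unfold k, fmax, fscal, Rmax, Rabs.
      destruct (Rle_dec (h x) (-1 * h x)); destruct (Rcase_abs (h x)); lra. }
    assert (L1 : Lfun E f h <= Lfun E f k).
    { apply Lmono; auto. intro x; rewrite kval; apply RRle_abs. }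
    assert (L2 : Lfun E f (fscal (-1) h) <= Lfun E f k).
    { apply Lmono; auto. intro x; rewrite kval; unfold fscal.
      rewrite <- Rabs_Ropp. replace (-1 * h x) with (- h x) by ring. apply RRle_abs. }
    rewrite (Lscal X D E hD hE) in L2 by auto.
    set (psi := fmax phi0 k).
    assert (Epsi : Eset D (fmul f f) psi).
    { split. unfold psi; auto. split.
      - intros x Hx. unfold psi, fmax, fmul in *.
        assert (f x <> 0) by (intro H; rewrite H in Hx; lra).
        rewrite (S0 x H). apply Rmax_l.
      - intro x. unfold psi, fmax, Rmax. specialize (B0 x). specialize (Hh x).
        rewrite kval. pose proof (Rabs_pos (h x)).
        destruct (Rle_dec (phi0 x) (Rabs (h x))); lra. }
    assert (L3 : Lfun E f k <= Lfun E f psi).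
    { apply Lmono; unfold psi; auto. intro x; apply Rmax_r. }
    rewrite (Lpsi psi Epsi) in L3.
    assert (0 <= E (fmul f f) psi) by (apply glb1; exists psi; auto).
    unfold Rabs; destruct (Rcase_abs (Lfun E f h)); lra.
  - intros b Hb.
    destruct (Rle_dec (2 * E f f) b) as [ok|nok]; auto. exfalso.
    set (eps := 2 * E f f - b).
    assert (~ (forall r, (exists phi, Eset D (fmul f f) phi /\ r = E (fmul f f) phi) -> eps <= r)).
    { intro H. specialize (glb2 eps H). unfold eps in glb2; lra. }
    apply not_all_ex_not in H. destruct H as [r Hr].
    apply imply_to_and in Hr. destruct Hr as [[phi [Ephi ->]] Hlt].
    assert (Hle : Rabs (Lfun E f phi) <= b).
    { apply Hb. exists phi. destruct Ephi as [Dphi [_ P2]]. split; auto. split; auto.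
      intro x; specialize (P2 x); rewrite Rabs_right; lra. }
    rewrite (Lpsi phi Ephi) in Hle.
    pose proof (RRle_abs (2 * E f f - E (fmul f f) phi)). unfold eps in Hlt. lra.
Qed.
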